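(* Let $r>1$, let $x_0,y_0$ be positive integers and let $\{(X_t,Y_t)\}_{t\ge 0}$ be the CA competition process with fitness ratio $r$ started at $(x_0,y_0)$. Let $N=\sum_{t=0}^\infty \mathbf{1}\{X_t=Y_t\}$ be the total number of ties. Then for every positive integer $n$, \[ \mathbb{P}[N\ge n]\le C\left(\frac{2}{1+r}\right)^{n-1}, \] where $C=1$ if $x_0\le y_0$, and \[ C=\frac{(y_0)_{x_0-y_0}}{(rx_0+y_0)_{x_0-y_0}}\left(1+\frac1r\right)^{x_0-y_0}\quad\text{if } x_0>y_0. \]
   Context: The CA competition process with fitness ratio $r\ge 1$ started at $(x_0,y_0)$ is the discrete-time Markov chain $\{(X_t,Y_t)\}_{t\ge0}$ on $\{(x,y)\in\mathbb{Z}^2: x\ge1,y\ge1\}$ with $(X_0,Y_0)=(x_0,y_0)$ and transition probabilities: from $(x,y)$ it moves to $(x+1,y)$ with probability $\frac{rx}{rx+y}$ and to $(x,y+1)$ with probability $\frac{y}{rx+y}$. $(x)_k=\prod_{i=0}^{k-1}(x+i)$ denotes the Pochhammer symbol (with $(x)_0=1$). *)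

(* Defs.v *)
From HB Require Import structures.
From mathcomp Require Import all_boot all_order all_algebra.
From mathcomp Require Import all_classical all_reals ereal.
Set Implicit Arguments. Unset Strict Implicit. Unset Printing Implicit Defensive.
Import Order.TTheory GRing.Theory Num.Theory.
Local Open Scope ring_scope.

(* A trajectory of the CA competition process over T steps is encoded by the
   sequence of moves: [true] = the X-coordinate increases, [false] = the
   Y-coordinate increases. *)

Definition ca_step_prob (R : realType) (r : R) (x y : nat) (b : bool) : R :=
  if b then r * x%:R / (r * x%:R + y%:R) else y%:R / (r * x%:R + y%:R).

Fixpoint ca_path_prob (R : realType) (r : R) (x y : nat) (s : seq bool) : R :=
  match s with
  | [::] => 1
  | b :: s' => ca_step_prob r x y b *
               ca_path_prob r (if b then x.+1 else x) (if b then y else y.+1) s'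
  end.

Fixpoint ca_ties (x y : nat) (s : seq bool) : nat :=
  ((x == y) : nat) +
  match s with
  | [::] => 0
  | b :: s' => ca_ties (if b then x.+1 else x) (if b then y else y.+1) s'
  end.

Definition ca_prob_ties_ge_upto (R : realType) (r : R) (x0 y0 T n : nat) : R :=
  \sum_(s : T.-tuple bool | (n <= ca_ties x0 y0 s)%N) ca_path_prob r x0 y0 s.

(* P[N >= n] with N = sum_{t>=0} 1{X_t = Y_t}: the events {N_T >= n} increase
   to {N >= n}, so by continuity of measure this is their supremum. *)
Definition ca_prob_ties_ge (R : realType) (r : R) (x0 y0 n : nat) : \bar R :=
  ereal_sup (range (fun T : nat => (ca_prob_ties_ge_upto r x0 y0 T n)%:E)).

Definition poch (R : realType) (a : R) (k : nat) : R :=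
  \prod_(i < k) (a + i%:R).

(* Main.v *)
Require Import Defs.
From HB Require Import structures.
From mathcomp Require Import all_boot all_order all_algebra.
From mathcomp Require Import all_classical all_reals ereal.
From mathcomp Require Import ring lra zify.
Import Order.TTheory GRing.Theory Num.Theory.
Set Implicit Arguments. Unset Strict Implicit. Unset Printing Implicit Defensive.
Local Open Scope ring_scope.

Lemma poch_recl (R : realType) (a : R) k : poch a k.+1 = a * poch (a + 1) k.
Proof.
rewrite /poch big_ord_recl /= addr0; congr (_ * _); apply: eq_bigr => i _.
by rewrite /bump /= add1n -nat1r addrA.
Qed.

Lemma poch_recr (R : realType) (a : R) k : poch a k.+1 = poch a k * (a + k%:R).
Proof. by rewrite /poch big_ord_recr. Qed.

Lemma poch_gt0 (R : realType) (a : R) k : 0 < a -> 0 < poch a k.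
Proof.
move=> ha; rewrite /poch; apply: prodr_gt0 => i _.
by apply: (lt_le_trans ha); rewrite lerDl.
Qed.

Lemma poch_ge0 (R : realType) (a : R) k : 0 <= a -> 0 <= poch a k.
Proof.
move=> ha; rewrite /poch; apply: prodr_ge0 => i _.
by apply: addr_ge0.
Qed.

Lemma poch_mono (R : realType) (a b : R) k : 0 <= a -> a <= b -> poch a k <= poch b k.
Proof.
move=> ha hab; rewrite /poch; apply: ler_prod => i _.
by rewrite addr_ge0 //= lerD2r.
Qed.

Definition Af (R : realType) (r : R) (x y : nat) : R :=
  if (x <= y)%N then 1
  else poch y%:R (x - y) / poch (r * x%:R + y%:R) (x - y) * (1 + r^-1) ^+ (x - y).

Lemma key_gt (R : realType) (r : R) (x y j : nat) : 1 < r ->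
  x = (y + j.+1)%N ->
  ca_step_prob r x y true * Af r x.+1 y + ca_step_prob r x y false * Af r x y.+1
  <= Af r x y.
Proof.
move=> r1 hx.
have r0 : 0 < r by lra.
have ex1 : (x - y)%N = j.+1 by lia.
have ex2 : (x.+1 - y)%N = j.+2 by lia.
set a := 1 + r^-1.
set X : R := x%:R; set Y : R := y%:R.
have hX : X = Y + j%:R + 1 by rewrite /X hx natrD -addn1 natrD addrA.
have Y0 : 0 <= Y by rewrite /Y ler0n.
have X1 : 1 <= X by rewrite hX lerDr addr_ge0.
set s := r * X + Y.
have s0 : 0 < s by rewrite /s ltr_pwDl // mulr_gt0 //; apply: lt_le_trans X1.
have hA1 : Af r x y = poch Y j.+1 / poch s j.+1 * a ^+ j.+1.
  by rewrite /Af ifF ?ex1 //; apply/negbTE; rewrite -ltnNge; lia.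
have hA2 : Af r x.+1 y = poch Y j.+2 / poch (r * (X + 1) + Y) j.+2 * a ^+ j.+2.
  by rewrite /Af ifF ?ex2 ?natr1 //; apply/negbTE; rewrite -ltnNge; lia.
have hA3 : Af r x y.+1 = poch (Y + 1) j / poch (s + 1) j * a ^+ j.
  rewrite /Af; case: ifP => h.
    have -> : j = 0%N by move: h; lia.
    by rewrite /poch !big_ord0 expr0 divr1 mulr1.
  have -> : (x - y.+1)%N = j by lia.
  by rewrite -natr1 addrA.
rewrite hA1 hA2 hA3 /ca_step_prob -/X -/Y -/s.
set P1 := poch (Y + 1) j; set Q := poch (s + 1) j.
have P10 : 0 < P1 by apply: poch_gt0; lra.
have Q0 : 0 < Q by apply: poch_gt0; lra.
set m := r * X + X.
have m0 : 0 < m by rewrite /m; nra.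
have hY2 : poch Y j.+2 = Y * P1 * X.
  by rewrite poch_recr poch_recl hX -natr1 addrA.
set D := poch (r * (X + 1) + Y) j.+2.
have hD : Q * (m * m) <= D.
  apply: (@le_trans _ _ (poch (s + 1) j.+2)); last first.
    apply: poch_mono; first by rewrite addr_ge0 // ltW.
    by rewrite /s mulrDr mulr1; lra.
  rewrite !poch_recr -/Q -mulrA ler_wpM2l ?ltW //.
  have -> : s + 1 + j%:R = m by rewrite /m /s hX; ring.
  have -> : s + 1 + j.+1%:R = m + 1 by rewrite /m /s hX -natr1; ring.
  nra.
have D0 : 0 < D by apply: lt_le_trans hD; rewrite mulr_gt0 // mulr_gt0.
rewrite hY2 (poch_recl Y) -/P1 (poch_recl s) -/Q.
apply: (@le_trans _ _ (r * X / s * (Y * P1 * X / (Q * (m * m)) * a ^+ j.+2) +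
   Y / s * (P1 / Q * a ^+ j))).
  have X0 : 0 < X by lra.
  have a0 : 0 < a by rewrite /a addr_gt0 ?invr_gt0.
  apply: lerD => //.
  apply: ler_wpM2l; first by rewrite divr_ge0 ?mulr_ge0 ?ltW.
  apply: ler_wpM2r; first by rewrite exprn_ge0 ?ltW.
  apply: (@ler_wpM2l _ (Y * P1 * X)); first by rewrite !mulr_ge0 // ltW.
  by rewrite lef_pV2 ?posrE ?mulr_gt0.
rewrite !exprS /a /m.
rewrite le_eqVlt; apply/orP; left; apply/eqP; field.
by rewrite -/X -/m (gt_eqF r0) (gt_eqF Q0) (gt_eqF s0) (gt_eqF m0).
Qed.
Lemma f_rec (R : realType) (r : R) x y T n :
  ca_prob_ties_ge_upto r x y T.+1 n =
  ca_step_prob r x y true * ca_prob_ties_ge_upto r x.+1 y T (n - (x==y)) +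
  ca_step_prob r x y false * ca_prob_ties_ge_upto r x y.+1 T (n - (x==y)).
Proof.
rewrite /ca_prob_ties_ge_upto.
rewrite (reindex (fun p : bool * T.-tuple bool => [tuple of p.1 :: p.2])) /=; last first.
  apply: onW_bij; exists (fun s : T.+1.-tuple bool => (thead s, [tuple of behead s])).
  - by case=> b t /=; rewrite theadE; congr pair; apply: val_inj.
  - by move=> s; apply: val_inj; rewrite /= [in RHS](tuple_eta s).
rewrite -(pair_big_dep xpredT (fun b (t : T.-tuple bool) => (n <= ca_ties x y (b :: t))%N)
  (fun b (t : T.-tuple bool) => ca_path_prob r x y (b :: t))) /=.
rewrite big_bool /= !mulr_sumr.
congr (_ + _); apply: eq_big => t; rewrite ?leq_subLR //.
Qed.

Definition gf (R : realType) (r : R) (x y n : nat) : R :=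
  if n == 0%N then 1 else Af r x y * (2 / (1 + r)) ^+ (n - 1).

Lemma Af_ge0 (R : realType) (r : R) x y : 0 < r -> 0 <= Af r x y.
Proof.
move=> r0; rewrite /Af; case: ifP => _ //.
have a0 : 0 <= 1 + r^-1 by rewrite addr_ge0 // invr_ge0 ltW.
apply: mulr_ge0; last by apply: exprn_ge0.
by apply: divr_ge0; apply: poch_ge0; [apply: ler0n | apply: addr_ge0; [apply: mulr_ge0; [apply: ltW | apply: ler0n] | apply: ler0n]].
Qed.

Lemma gf_ge0 (R : realType) (r : R) x y n : 0 < r -> 0 <= gf r x y n.
Proof.
move=> r0; rewrite /gf; case: ifP => _ //.
by rewrite mulr_ge0 ?Af_ge0 ?exprn_ge0 ?divr_ge0 ?addr_ge0 ?ltW.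
Qed.

Lemma Af_le (R : realType) (r : R) x y : (x <= y)%N -> Af r x y = 1.
Proof. by move=> h; rewrite /Af h. Qed.

Lemma step_ineq (R : realType) (r : R) x y n : 1 < r -> (0 < x)%N ->
  ca_step_prob r x y true * gf r x.+1 y (n - (x == y)) +
  ca_step_prob r x y false * gf r x y.+1 (n - (x == y)) <= gf r x y n.
Proof.
move=> r1 x0.
have r0 : 0 < r by lra.
have X0 : 0 < (x%:R : R) by rewrite ltr0n.
have Y0 : 0 <= (y%:R : R) by rewrite ler0n.
have s0 : 0 < r * x%:R + y%:R by rewrite ltr_pwDl // mulr_gt0.
have px0 : 0 <= ca_step_prob r x y true by rewrite /ca_step_prob /=; apply: divr_ge0; [apply: mulr_ge0; apply: ltW|apply: ltW].
have py0 : 0 <= ca_step_prob r x y false by rewrite /ca_step_prob /=; apply: divr_ge0; [|apply: ltW].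
have pxy : ca_step_prob r x y true + ca_step_prob r x y false = 1.
  by rewrite /ca_step_prob /= -mulrDl divff // gt_eqF.
set q := 2 / (1 + r).
have q0 : 0 <= q by rewrite /q divr_ge0 ?addr_ge0 ?ltW.
case: n => [|n].
  by rewrite /gf sub0n /= !mulr1 pxy.
case: (eqVneq x y) => [exy|hxy] /=; first subst y.
  rewrite subn1 /=.
  case: n => [|k].
    by rewrite /gf /= !mulr1 pxy Af_le // expr0 mulr1.
  rewrite /gf /= !subn1 /= (Af_le _ (leqnSn x)) (Af_le _ (leqnn x)).
  rewrite -/q !mul1r exprS mulrA -mulrDl.
  apply: ler_wpM2r; first exact: exprn_ge0.
  rewrite /Af ifF; last by apply/negbTE; rewrite -ltnNge.
  rewrite subSn // subnn /poch !big_ord1 /= !addr0 expr1.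
  rewrite -subr_ge0 /ca_step_prob.
  have -> : q - (r * x%:R / (r * x%:R + x%:R) *
      (x%:R / (r * x.+1%:R + x%:R) * (1 + r^-1)) + x%:R / (r * x%:R + x%:R))
      = r / ((1 + r) * (r * x.+1%:R + x%:R)).
    rewrite /q -natr1; field.
    have h1 : 0 < 1 + r by lra.
    apply/and4P; split; apply: lt0r_neq0 => //.
      by apply: addr_gt0 => //; apply: mulr_gt0 => //; apply: addr_gt0.
  have XS0 : 0 < (x.+1%:R : R) by rewrite ltr0Sn.
  apply: divr_ge0; first exact: ltW.
  apply: mulr_ge0; first by apply: ltW; lra.
  by apply: ltW; apply: addr_gt0 => //; apply: mulr_gt0.
rewrite subn0 /gf /= subn1 /= -/q !mulrA -mulrDl.
apply: ler_wpM2r; first exact: exprn_ge0.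
case: (ltngtP x y) hxy => // [hlt|hgt] _.
  rewrite (Af_le _ hlt) (Af_le _ (ltnW hlt)) Af_le ?(leqW (ltnW hlt)) // !mulr1.
  by move: pxy; rewrite /ca_step_prob /= => ->.
apply: (@key_gt _ _ _ _ (x - y.+1)%N r1); lia.
Qed.

Lemma bound (R : realType) (r : R) T : 1 < r -> forall x y n, (0 < x)%N ->
  ca_prob_ties_ge_upto r x y T n <= gf r x y n.
Proof.
move=> r1; have r0 : 0 < r by lra.
elim: T => [|T IH] x y n x0.
  rewrite /ca_prob_ties_ge_upto.
  have E : forall s : 0.-tuple bool, (s : seq bool) = [::] by move=> s; rewrite (tuple0 s).
  rewrite (eq_bigr (fun=> 1)) => [|s _]; last by rewrite E.
  rewrite (eq_bigl (fun=> (n <= (x == y))%N)) => [|s]; last by rewrite E /= addn0.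
  case: (leqP n (x == y)) => h.
    rewrite sumr_const card_tuple expn0 mulr1n /gf.
    case: eqP => // /eqP n0.
    have n1 : n = 1%N by move: h n0; case: (x == y); lia.
    have exy : x = y by move: h n0; case: eqP => //; lia.
    by rewrite n1 exy Af_le // expr0 mulr1.
  rewrite big_pred0; first exact: gf_ge0.
  by move=> s /=; rewrite ?leqNgt ?h.
rewrite f_rec.
apply: le_trans; last exact: step_ineq.
have px0 : 0 <= ca_step_prob r x y true.
  rewrite /ca_step_prob /=; apply: divr_ge0; first by apply: mulr_ge0; [apply: ltW|apply: ler0n].
  by apply: addr_ge0; [apply: mulr_ge0; [apply: ltW|apply: ler0n]|apply: ler0n].
have py0 : 0 <= ca_step_prob r x y false.
  rewrite /ca_step_prob /=; apply: divr_ge0; first by apply: ler0n.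
  by apply: addr_ge0; [apply: mulr_ge0; [apply: ltW|apply: ler0n]|apply: ler0n].
by apply: lerD; apply: ler_wpM2l => //; apply: IH.
Qed.

Theorem theorem4 (R : realType) (r : R) (x0 y0 n : nat) :
  1 < r -> (0 < x0)%N -> (0 < y0)%N -> (0 < n)%N ->
  let C : R :=
    if (x0 <= y0)%N then 1
    else poch y0%:R (x0 - y0) / poch (r * x0%:R + y0%:R) (x0 - y0)
         * (1 + r^-1) ^+ (x0 - y0) in
  (ca_prob_ties_ge r x0 y0 n <= (C * (2 / (1 + r)) ^+ (n - 1))%:E)%E.
Proof.
move=> r1 hx hy hn /=.
apply: ge_ereal_sup => _ [T _ <-].
rewrite lee_fin.
have := @bound R r T r1 x0 y0 n hx.
by rewrite /gf /Af ifF //; apply/negbTE; rewrite -lt0n.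
Qed.
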